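(* Let $X,Y$ be Banach lattices and let $\mathcal S$ be a family of convex continuous operators $X\to Y$ such that $\sup_{S\in\mathcal S}\|Sx\|<\infty$ for all $x\in X$. Then: (i) there exists $r>0$ with $\sup_{S\in\mathcal S}\|S\|_r<\infty$; (ii) for every $x_0\in X$ there exists $r>0$ with $\sup_{x\in B(x_0,r)}\sup_{S\in\mathcal S}\|S_x\|_r<\infty$.
   Context: An operator $S\colon X\to Y$ is convex if $S(\lambda x+(1-\lambda)y)\le\lambda Sx+(1-\lambda)Sy$ for all $x,y\in X$, $\lambda\in[0,1]$. $B(x_0,r):=\{x\in X:\|x-x_0\|\le r\}$, $\|S\|_r:=\sup_{x\in B(0,r)}\|Sx\|$, and $S_x y:=S(x+y)-Sx$ for $x,y\in X$. *)

(* Defs.v *)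
From HB Require Import structures.
From mathcomp Require Import all_boot all_order all_algebra.
From mathcomp Require Import all_classical all_reals all_analysis.
Set Implicit Arguments. Unset Strict Implicit. Unset Printing Implicit Defensive.
Import Order.TTheory GRing.Theory Num.Theory.
Import numFieldNormedType.Exports.
Local Open Scope classical_set_scope.
Local Open Scope ring_scope.

(* A (real) Banach lattice: a real Banach space V (completeNormedModType R)
   equipped with an order relation [le] making it a vector lattice, with a
   lattice norm: |x| <= |y| implies ||x|| <= ||y||, where |x| = x \/ (-x). *)

Definition is_lub_of {T : Type} (le : T -> T -> Prop) (x y s : T) : Prop :=
  le x s /\ le y s /\ forall u, le x u -> le y u -> le s u.

Record is_banach_lattice (R : realType) (V : completeNormedModType R)
    (le : V -> V -> Prop) : Prop := {
  bl_refl : forall x, le x x;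
  bl_antisym : forall x y, le x y -> le y x -> x = y;
  bl_trans : forall x y z, le x y -> le y z -> le x z;
  bl_add : forall x y z, le x y -> le (x + z) (y + z);
  bl_scale : forall (a : R) x y, 0 <= a -> le x y -> le (a *: x) (a *: y);
  bl_sup : forall x y, exists s, is_lub_of le x y s;
  bl_norm : forall x y ax ay, is_lub_of le x (- x) ax -> is_lub_of le y (- y) ay ->
     le ax ay -> `|x| <= `|y|
}.

Definition convex_operator (R : realType) (X Y : completeNormedModType R)
    (leY : Y -> Y -> Prop) (S : X -> Y) : Prop :=
  forall (x y : X) (l : R), 0 <= l <= 1 ->
    leY (S (l *: x + (1 - l) *: y)) (l *: S x + (1 - l) *: S y).

(* Main.v *)
Require Import Defs.
From HB Require Import structures.
From mathcomp Require Import all_boot all_order all_algebra.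
From mathcomp Require Import all_classical all_reals all_analysis.
Import Order.TTheory GRing.Theory Num.Theory.
Import numFieldNormedType.Exports.
Local Open Scope classical_set_scope.
Local Open Scope ring_scope.

From mathcomp Require Import lra.
Set Implicit Arguments. Unset Strict Implicit. Unset Printing Implicit Defensive.
Lemma baire_ball (R : realType) (X Y : completeNormedModType R) (F : set (X -> Y))
    (hcont : forall S, F S -> continuous S)
    (BoundedF : forall x : X, exists M : R, forall S, F S -> `|S x| <= M) :
  exists (n : nat) (x0 : X) (r : R), 0 < r /\
    forall f x, F f -> ball x0 r x -> `|f x| <= n%:R.
Proof.
set O := fun n : nat => \bigcup_(f in F) (Num.norm \o f)@^-1` [set y : R | y > n%:R].
have O_open : forall n, open ( O n ).
  move=> n; apply: bigcup_open => i Fi.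
  apply: (@open_comp _ _ (Num.norm \o i) [set y | y > n%:R]); last first.
    exact: open_gt.
  move=> x Hx; apply: continuous_comp; last exact: norm_continuous.
  exact: hcont.
set O_inf := \bigcap_i (O i).
have O_infempty : O_inf = set0.
  rewrite -subset0 => x.
  have [M FxM] := BoundedF x; rewrite /O_inf /O /=.
  move=> /(_ (Num.truncn M).+1 Logic.I)[f Ff]; apply/negP; rewrite -leNgt.
  by apply/ltW; rewrite -truncn_le_nat le_truncn ?FxM.
have ContraBaire : exists i, not (dense (O i)).
  have dOinf : ~ dense O_inf.
    rewrite /dense O_infempty ; apply /existsNP; exists setT; elim.
    - by move=> x; rewrite setI0.
    - by exists point.
    - exact: openT.
  have /contra_not/(_ dOinf) :
      (forall i, open (O i) /\ dense (O i)) -> dense (O_inf).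
    exact: Baire.
  move=> /asboolPn /existsp_asboolPn[n /and_asboolP /nandP Hn].
  by exists n; case: Hn => /asboolPn.
have [n [x0 [r H]]] :
    exists n x (r : {posnum R}), (ball x r%:num) `<=` (~` (O n)).
  move: ContraBaire =>
  [i /(denseNE) [ O0 [ [ x /open_nbhs_nbhs /nbhs_ballP [r r0 bxr]
   /((@subsetI_eq0 _ (ball x r) O0 (O i) (O i)))]]]] /(_ bxr) bxrOi.
  by exists i, x, (PosNum r0); apply/disjoints_subset/bxrOi.
exists n, x0, r%:num; split => // g x Fg /(H x); rewrite leNgt.
by rewrite /O setC_bigcup /= => /(_ _ Fg)/negP.
Qed.
Section L.
Variables (R : realType) (Y : completeNormedModType R) (le : Y -> Y -> Prop)
  (hY : is_banach_lattice le).

Lemma le_neg x y : le x y -> le (- y) (- x).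
Proof.
move=> h; have := bl_add hY (- x - y) h.
by rewrite addrA subrr add0r addrCA subrr addr0.
Qed.

Lemma le_addl x y z : le x y -> le (z + x) (z + y).
Proof. by move=> h; have := bl_add hY z h; rewrite ![_ + z]addrC. Qed.

Lemma le_add x y u v : le x y -> le u v -> le (x + u) (y + v).
Proof.
move=> h1 h2; apply: (bl_trans hY (bl_add hY u h1)); exact: le_addl.
Qed.

Lemma lub_pos x s : is_lub_of le x (- x) s -> le 0 s.
Proof.
move=> [h1 [h2 _]].
have := le_add h1 h2; rewrite subrr => h.
have h2p : (0:R) <= 2^-1 by rewrite invr_ge0.
  have := bl_scale hY h2p h.
by rewrite scaler0 -mulr2n -(scaler_nat 2 s) scalerA mulVf ?pnatr_eq0 // scale1r.
Qed.

Lemma lub_self p : le 0 p -> is_lub_of le p (- p) p.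
Proof.
move=> hp; split; first exact: bl_refl.
split; last by [].
apply: (bl_trans hY _ hp); have := le_neg hp; by rewrite oppr0.
Qed.

Lemma order_bound a y b : le a y -> le y b -> `|y| <= `|a| + `|b|.
Proof.
move=> hay hyb.
have [sa ha] := bl_sup hY a (- a).
have [sb hb] := bl_sup hY b (- b).
have [sy hy] := bl_sup hY y (- y).
have pa := lub_pos ha; have pb := lub_pos hb.
have pp : le 0 (sa + sb) by rewrite -[0](addr0 0); exact: le_add.
have le1 : le y (sa + sb).
  apply: (bl_trans hY hyb); apply: (bl_trans hY (proj1 hb)).
  by have := bl_add hY sb pa; rewrite add0r.
have le2 : le (- y) (sa + sb).
  apply: (bl_trans hY (le_neg hay)); apply: (bl_trans hY (proj1 (proj2 ha))).
  by have := le_addl sa pb; rewrite addr0.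
have h1 : `|y| <= `|sa + sb| := bl_norm hY hy (lub_self pp) ((proj2 (proj2 hy)) _ le1 le2).
apply: (le_trans h1); apply: (le_trans (ler_normD _ _)).
apply: lerD.
  exact: (bl_norm hY (lub_self pa) ha (bl_refl hY sa)).
exact: (bl_norm hY (lub_self pb) hb (bl_refl hY sb)).
Qed.

End L.
Lemma dist2 (V : zmodType) (a x0 p : V) :
  a - (p + (p - (x0 + (x0 - a)))) = - ((p - x0) + (p - x0)).
Proof.
rewrite !opprD !opprK !addrA.
rewrite [LHS]addrC !addrA addNr add0r; congr (_ + _); by rewrite addrAC.
Qed.
Lemma half (R : realFieldType) : (1 - 2^-1 : R) = 2^-1.
Proof. lra. Qed.
Lemma midv (V : zmodType) (u v : V) : u + (v + (v - u)) = v + v.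
Proof. by rewrite addrCA [u + _]addrCA subrr addr0. Qed.

Lemma halfK (R : realType) (V : lmodType R) (v : V) : 2^-1 *: (v + v) = v.
Proof. by rewrite -mulr2n -(scaler_nat 2 v) scalerA mulVf ?pnatr_eq0 // scale1r. Qed.

Lemma local_bound (R : realType) (X Y : completeNormedModType R)
    (leY : Y -> Y -> Prop) (hY : is_banach_lattice leY)
    (F : set (X -> Y))
    (hconv : forall S, F S -> convex_operator leY S)
    (hcont : forall S, F S -> continuous S)
    (hbdd : forall x : X, exists M : R, forall S, F S -> `|S x| <= M) (x0 : X) :
  exists rho : R, 0 < rho /\ exists K : R,
    forall S, F S -> forall z, `|z - x0| <= rho -> `|S z| <= K.
Proof.
have [n [a [eps [eps0 Hb]]]] := baire_ball hcont hbdd.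
set c := x0 + (x0 - a).
have [M0 hM0] := hbdd x0. have [Mc hMc] := hbdd c.
exists (eps / 4); split; first by rewrite divr_gt0.
exists (2 * M0 + Mc + n%:R) => S FS.
have conv u v : leY (S (2^-1 *: u + 2^-1 *: v)) (2^-1 *: S u + 2^-1 *: S v).
  have := hconv S FS u v (2^-1); rewrite half; apply.
  apply/andP; split; lra.
have upper p : `|p - x0| <= eps/4 -> exists B, leY (S p) B /\ `|B| <= 2^-1 * Mc + 2^-1 * n%:R.
  move=> hp; exists (2^-1 *: S c + 2^-1 *: S (p + (p - c))); split.
    by have := conv c (p + (p - c)); rewrite -scalerDr midv halfK.
  apply: (le_trans (ler_normD _ _)); rewrite !normrZ ger0_norm ?invr_ge0 //.
  apply: lerD; apply: ler_wpM2l; rewrite ?invr_ge0 //; first exact: hMc.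
  apply: Hb => //; rewrite -ball_normE /ball_ /= /c dist2 normrN.
  apply: (le_lt_trans (ler_normD _ _)); lra.
move=> z hz.
have [B [hB nB]] := upper z hz.
set z' := x0 + (x0 - z).
have hz' : `|z' - x0| <= eps/4 by rewrite /z' addrAC subrr add0r distrC.
have [B' [hB' nB']] := upper z' hz'.
have low : leY (2 *: S x0 - B') (S z).
  have h1 := conv z z'; rewrite -scalerDr /z' midv halfK in h1.
  have h2 := bl_scale hY (ler0n R 2) h1.
  rewrite scalerDr !scalerA mulfV ?pnatr_eq0 // !scale1r in h2.
  have h3 := bl_add hY (- S z') h2; rewrite addrK in h3.
  have h4 := le_addl hY (2 *: S x0) (le_neg hY hB').
  exact: (bl_trans hY h4 h3).
have := order_bound hY low hB.
move/le_trans; apply.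
have : `|2 *: S x0 - B'| <= 2 * M0 + (2^-1 * Mc + 2^-1 * n%:R).
  apply: (le_trans (ler_normB _ _)); apply: lerD => //.
  by rewrite normrZ ger0_norm // ler_wpM2l // hM0.
have := hM0 S FS.
lra.
Qed.

Theorem theoremA9 (R : realType) (X Y : completeNormedModType R)
    (leX : X -> X -> Prop) (leY : Y -> Y -> Prop)
    (hX : is_banach_lattice leX) (hY : is_banach_lattice leY)
    (F : set (X -> Y))
    (hconv : forall S, F S -> convex_operator leY S)
    (hcont : forall S, F S -> continuous S)
    (hbdd : forall x : X, exists M : R, forall S, F S -> `|S x| <= M) :
  (exists r : R, 0 < r /\ exists M : R,
      forall S, F S -> forall x : X, `|x| <= r -> `|S x| <= M)
  /\
  (forall x0 : X, exists r : R, 0 < r /\ exists M : R,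
      forall x : X, `|x - x0| <= r ->
      forall S, F S -> forall y : X, `|y| <= r -> `|S (x + y) - S x| <= M).
Proof.
split.
  have [rho [rho0 [K HK]]] := local_bound hY hconv hcont hbdd 0.
  exists rho; split => //; exists K => S FS x hx; apply: HK => //.
  by rewrite subr0.
move=> x0.
have [rho [rho0 [K HK]]] := local_bound hY hconv hcont hbdd x0.
exists (rho / 2); split; first by rewrite divr_gt0.
exists (K + K) => x hx S FS y hy.
apply: (le_trans (ler_normB _ _)); apply: lerD; apply: HK => //.
  rewrite addrAC; apply: (le_trans (ler_normD _ _)); lra.
by apply: (le_trans hx); lra.
Qed.
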